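(* For every integer $m\ge 0$ and every real $a>-1$, $$\int_0^\infty\frac{dx}{(x^4+2ax^2+1)^{m+1}}=\frac{\pi}{2}\,\frac{P_m(a)}{[2(a+1)]^{m+1/2}},$$ where $$P_m(a)=\frac{(1/2)_m}{((2m)!)^2}\sum_{i=0}^m\frac{(2m-2i)!\,(2m+2i)!}{(m+1/2)_i\,(m-i)!}\binom{m}{i}\left(\frac{a+1}{2}\right)^{i}.$$ Equivalently, $P_m(a)=\sum_{j=0}^m d_{j,m}a^j$ with $$d_{j,m}=\frac{(1/2)_m}{((2m)!)^2}\sum_{i=j}^m\frac{(2m-2i)!\,(2m+2i)!}{(m+1/2)_i\,(m-i)!\,2^{i}}\binom{m}{i}\binom{i}{j}.$$
   Context: $(c)_k$ denotes the Pochhammer symbol (rising factorial): $(c)_0=1$, $(c)_k=c(c+1)\cdots(c+k-1)$ for $k\ge 1$. *)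

(* Defs.v *)
From Stdlib Require Import Reals Lra Arith Factorial.
Open Scope R_scope.

Fixpoint poch (c : R) (k : nat) : R :=
  match k with
  | O => 1
  | S k' => poch c k' * (c + INR k')
  end.

Definition improper_int_0_inf (f : R -> R) (l : R) : Prop :=
  (forall b : R, 0 <= b -> inhabited (Riemann_integrable f 0 b)) /\
  (forall eps : R, eps > 0 -> exists M : R, forall (b : R) (pr : Riemann_integrable f 0 b),
      b >= M -> Rabs (RiemannInt pr - l) < eps).

Definition Pm (m : nat) (a : R) : R :=
  poch (/2) m / (INR (fact (2*m)))^2 *
  sum_f_R0 (fun i =>
    INR (fact (2*m - 2*i)) * INR (fact (2*m + 2*i))
      / (poch (INR m + /2) i * INR (fact (m - i)))
      * C m i * ((a + 1) / 2)^i) m.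

Definition dcoef (j m : nat) : R :=
  poch (/2) m / (INR (fact (2*m)))^2 *
  sum_f_R0 (fun k => let i := (j + k)%nat in
    INR (fact (2*m - 2*i)) * INR (fact (2*m + 2*i))
      / (poch (INR m + /2) i * INR (fact (m - i)) * 2^i)
      * C m i * C i j) (m - j).

(* Main.v *)
Require Import Defs.
From Stdlib Require Import Reals Lra Lia Psatz Arith Factorial.
Open Scope R_scope.

Notation D := derivable_pt_lim.

Lemma D_eqv f x l l' : D f x l -> l = l' -> D f x l'.
Proof. intros H ->; exact H. Qed.
Lemma D_ext f g x l : (forall y, f y = g y) -> D f x l -> D g x l.
Proof. apply derivable_pt_lim_ext. Qed.
Lemma D_plus f g x lf lg : D f x lf -> D g x lg -> D (fun y => f y + g y) x (lf+lg).
Proof. intros; apply (derivable_pt_lim_plus f g); auto. Qed.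
Lemma D_minus f g x lf lg : D f x lf -> D g x lg -> D (fun y => f y - g y) x (lf-lg).
Proof. intros; apply (derivable_pt_lim_minus f g); auto. Qed.
Lemma D_mult f g x lf lg : D f x lf -> D g x lg -> D (fun y => f y * g y) x (lf * g x + f x * lg).
Proof. intros; apply (derivable_pt_lim_mult f g); auto. Qed.
Lemma D_scal k f x lf : D f x lf -> D (fun y => k * f y) x (k*lf).
Proof. intros; apply (derivable_pt_lim_scal f k); auto. Qed.
Lemma D_const k x : D (fun _ => k) x 0.
Proof. apply (derivable_pt_lim_const k). Qed.
Lemma D_id x : D (fun y => y) x 1.
Proof. apply derivable_pt_lim_id. Qed.
Lemma D_div f g x lf lg : D f x lf -> D g x lg -> g x <> 0 ->
  D (fun y => f y / g y) x ((lf * g x - lg * f x) / (g x)^2).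
Proof. intros. eapply D_eqv. apply (derivable_pt_lim_div f g x lf lg); auto.
  unfold Rsqr; simpl; field; auto. Qed.
Lemma D_comp f g x lf lg : D f x lf -> D g (f x) lg -> D (fun y => g (f y)) x (lg * lf).
Proof. intros; apply (derivable_pt_lim_comp f g); auto. Qed.
Lemma D_pow f x lf n : D f x lf -> D (fun y => f y ^ n) x (INR n * f x ^ pred n * lf).
Proof. intros. apply (D_comp f (fun z => z^n)); auto. apply derivable_pt_lim_pow. Qed.

Lemma FTC_gen (f F : R -> R) (a b : R) (pr : Riemann_integrable f a b) :
  a <= b -> (forall x, a <= x <= b -> continuity_pt f x) ->
  (forall x, a <= x <= b -> D F x (f x)) -> RiemannInt pr = F b - F a.
Proof.
  intros Hab Hc HD.
  rewrite (RiemannInt_P20 Hab (FTC_P1 Hab Hc) pr).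
  assert (H1 := RiemannInt_P29 Hab Hc).
  assert (H2 : antiderivative f F a b).
  { split; auto. intros x Hx. exists (exist _ (f x) (HD x Hx)). reflexivity. }
  destruct (antiderivative_Ucte f _ _ a b H1 H2) as [C HC].
  rewrite (HC b), (HC a); lra.
Qed.

Definition lim_inf (F : R -> R) (l : R) : Prop :=
  forall eps, eps > 0 -> exists M, forall x, x >= M -> Rabs (F x - l) < eps.

Lemma lim_ext F G l M0 : (forall x, x >= M0 -> F x = G x) -> lim_inf F l -> lim_inf G l.
Proof. intros HE H eps He. destruct (H eps He) as [M HM]. exists (Rmax M M0).
  intros x Hx. rewrite <- HE. apply HM. pose (Rmax_l M M0). lra. pose (Rmax_r M M0). lra. Qed.
Lemma lim_const k : lim_inf (fun _ => k) k.
Proof. intros eps He. exists 0. intros. rewrite Rminus_diag, Rabs_R0. lra. Qed.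
Lemma lim_plus F G l1 l2 : lim_inf F l1 -> lim_inf G l2 -> lim_inf (fun x => F x + G x) (l1+l2).
Proof. intros H1 H2 eps He. destruct (H1 (eps/2)) as [M1 HM1]. lra. destruct (H2 (eps/2)) as [M2 HM2]. lra.
  exists (Rmax M1 M2). intros x Hx. pose (Rmax_l M1 M2). pose (Rmax_r M1 M2).
  specialize (HM1 x ltac:(lra)). specialize (HM2 x ltac:(lra)).
  replace (F x + G x - (l1+l2)) with ((F x - l1) + (G x - l2)) by ring.
  eapply Rle_lt_trans. apply Rabs_triang. lra. Qed.
Lemma lim_scal k F l : lim_inf F l -> lim_inf (fun x => k * F x) (k*l).
Proof. intros H eps He. destruct (H (eps / (Rabs k + 1))) as [M HM].
  apply Rdiv_lt_0_compat; [lra| pose (Rabs_pos k); lra].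
  exists M. intros x Hx. specialize (HM x Hx).
  replace (k * F x - k * l) with (k * (F x - l)) by ring. rewrite Rabs_mult.
  pose (Rabs_pos k). pose (Rabs_pos (F x - l)).
  apply Rle_lt_trans with ((Rabs k + 1) * Rabs (F x - l)). nra.
  replace eps with ((Rabs k + 1) * (eps / (Rabs k + 1))) by (field; lra).
  apply Rmult_lt_compat_l; lra. Qed.
Lemma lim_minus F G l1 l2 : lim_inf F l1 -> lim_inf G l2 -> lim_inf (fun x => F x - G x) (l1-l2).
Proof. intros. apply (lim_ext (fun x => F x + (-1) * G x)) with 0. intros; ring.
  replace (l1 - l2) with (l1 + (-1)*l2) by ring. apply lim_plus; auto. apply lim_scal; auto. Qed.
Lemma lim_unique_shift F l l' : lim_inf F l -> l = l' -> lim_inf F l'.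
Proof. intros H ->; auto. Qed.

Definition Q (a x : R) := x^4 + 2*a*x^2 + 1.

Lemma Q_pos a x : a > -1 -> 0 < Q a x.
Proof. intros Ha. unfold Q. assert (0 <= x^2) by nra.
  replace (x^4) with (x^2*x^2) by ring. set (t := x^2) in *.
  destruct (Rle_dec 0 a).
  - assert (0 <= a*t) by (apply Rmult_le_pos; lra). assert (0 <= t*t) by (apply Rmult_le_pos; lra). lra.
  - assert (0 < 1 - a*a) by nra. assert (0 <= (t+a)*(t+a)) by apply Rle_0_sqr. nra. Qed.

Lemma Q_ge a x : a > -1 -> x >= 2 -> Q a x >= x^4/2.
Proof. intros Ha Hx. unfold Q. assert (4 <= x^2) by nra.
  replace (x^4) with (x^2*x^2) by ring. nra. Qed.

Lemma lim_rat0 a p n : a > -1 -> (p+1 <= 4*n)%nat ->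
  lim_inf (fun x => x^p / Q a x ^ n) 0.
Proof.
  intros Ha Hp eps He.
  exists (Rmax 2 (2^n/eps + 1)). intros x Hx.
  pose proof (Rmax_l 2 (2^n/eps+1)); pose proof (Rmax_r 2 (2^n/eps+1)).
  assert (Hx2 : x >= 2) by lra.
  assert (HQ := Q_ge a x Ha Hx2).
  assert (Hq0 : 0 < Q a x) by (apply Q_pos; auto).
  assert (Hqn : 0 < Q a x ^ n) by (apply pow_lt; auto).
  assert (Hxp : 0 < x ^ p) by (apply pow_lt; lra).
  rewrite Rminus_0_r, Rabs_pos_eq by (apply Rlt_le, Rdiv_lt_0_compat; auto).
  assert (H4n : x^(4*n) = x^p * x^(4*n-p)) by (rewrite <- pow_add; f_equal; lia).
  assert (Hge : x^(4*n-p) >= x). { replace x with (x^1) at 2 by ring.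
    apply Rle_ge, Rle_pow; lia || lra. }
  assert (HQn : Q a x ^ n >= (x^4/2)^n). { apply Rle_ge, pow_incr. split. 
    assert (0 < x^4) by (apply pow_lt; lra). lra. lra. }
  assert (Hx4 : (x^4/2)^n = x^(4*n) / 2^n).
  { unfold Rdiv. rewrite Rpow_mult_distr, pow_mult, pow_inv. reflexivity. }
  assert (H2n : 0 < 2^n) by (apply pow_lt; lra).
  apply Rle_lt_trans with (2^n / x).
  { apply Rmult_le_reg_r with (Q a x ^ n); auto. unfold Rdiv. rewrite Rmult_assoc, Rinv_l by lra.
    apply Rle_trans with (2^n / x * (x^4/2)^n). rewrite Hx4, H4n.
    field_simplify; try lra. apply Rmult_le_reg_r with x; [lra|].
    unfold Rdiv. rewrite !Rmult_assoc, Rinv_l by lra. nra.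
    apply Rmult_le_compat_l. apply Rlt_le, Rdiv_lt_0_compat; lra. lra. }
  apply Rlt_le_trans with (2^n / (2^n/eps)).
  apply Rmult_lt_compat_l; auto. apply Rinv_lt_contravar.
  apply Rmult_lt_0_compat; [apply Rdiv_lt_0_compat|]; lra. lra.
  right; field; lra.
Qed.

Definition cc (a : R) := sqrt (2*(a+1)).

Lemma cc_pos a : a > -1 -> 0 < cc a.
Proof. intros; unfold cc; apply sqrt_lt_R0; lra. Qed.
Lemma cc_sq a : a > -1 -> cc a * cc a = 2*(a+1).
Proof. intros; unfold cc; apply sqrt_sqrt; lra. Qed.

Lemma D_Q a x : D (Q a) x (4*x^3 + 4*a*x).
Proof.
  unfold Q. eapply D_eqv.
  apply D_plus. apply D_plus. apply (D_pow (fun y => y)), D_id.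
  apply D_scal. apply (D_pow (fun y => y)), D_id. apply D_const.
  simpl; ring.
Qed.

Definition Dn a x := 1 - x^2 + sqrt (Q a x).

Lemma Dn_pos a x : a > -1 -> 0 < Dn a x.
Proof.
  intros Ha. unfold Dn. assert (HQ := Q_pos a x Ha).
  assert (Hs := sqrt_lt_R0 _ HQ).
  destruct (Rle_dec (x^2) 1). lra.
  assert (Hc := cc_sq a Ha). assert (Hcp := cc_pos a Ha).
  assert (Q a x = (x^2-1)^2 + (cc a * cc a) * x^2) by (rewrite Hc; unfold Q; ring).
  assert (sqrt ((x^2-1)^2) < sqrt (Q a x)).
  { apply sqrt_lt_1. nra. lra. rewrite H. assert (0 < x^2) by nra.
    assert (0 < cc a * cc a * x^2) by (apply Rmult_lt_0_compat; nra). lra. }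
  rewrite sqrt_pow2 in H0 by lra. lra.
Qed.

Definition H0 a x := 2 / cc a * atan (cc a * x / Dn a x).

Lemma D_H0 a x : a > -1 -> D (H0 a) x ((1+x^2)/Q a x).
Proof.
  intros Ha.
  assert (HQ := Q_pos a x Ha). assert (HD := Dn_pos a x Ha).
  assert (Hc := cc_sq a Ha). assert (Hcp := cc_pos a Ha).
  assert (Hs := sqrt_lt_R0 _ HQ). assert (Hss := sqrt_sqrt _ (Rlt_le _ _ HQ)).
  set (s := sqrt (Q a x)) in *. set (c := cc a) in *.
  assert (HDs : D (fun y => sqrt (Q a y)) x (/ (2*s) * (4*x^3 + 4*a*x))).
  { apply (D_comp (Q a) sqrt). apply D_Q. apply derivable_pt_lim_sqrt; auto. }
  assert (HDD : D (Dn a) x (0 - 2*x + / (2*s) * (4*x^3 + 4*a*x))).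
  { unfold Dn. apply D_plus. eapply D_eqv. apply D_minus. apply D_const.
    apply (D_pow (fun y => y)), D_id. simpl; ring. auto. }
  assert (HDg := D_div (fun y => c * y) (Dn a) x _ _ (D_scal c _ x _ (D_id x)) HDD ltac:(lra)).
  unfold H0. eapply D_eqv. apply D_scal. apply (D_comp (fun y => c*y / Dn a y) atan).
  exact HDg. apply derivable_pt_lim_atan.
  fold s c. unfold Dn. fold s.
  assert (E1 : (1 - x^2 + s)^2 + c*c*x^2 = 2*s*(1-x^2+s)).
  { rewrite Hc. replace ((1 - x^2 + s)^2 + 2*(a+1)*x^2) with (2*s*(1-x^2+s) + (Q a x - s*s))
      by (unfold Q; ring). rewrite Hss; ring. }
  assert (E2 : (1 - x^2 + s) - x*(0 - 2*x + /(2*s)*(4*x^3 + 4*a*x)) = (1+x^2)*(1-x^2+s)/s).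
  { replace ((1 - x^2 + s) - x*(0 - 2*x + /(2*s)*(4*x^3 + 4*a*x)))
      with ((1+x^2)*(1-x^2+s)/s + (s*s - Q a x)/s) by (unfold Q; field; lra).
    rewrite Hss. field; lra. }
  unfold Dn in HD. fold s in HD.
  transitivity (2*((1 - x^2 + s) - x*(0 - 2*x + /(2*s)*(4*x^3 + 4*a*x))) / ((1 - x^2 + s)^2 + c*c*x^2)).
  field. repeat split; try lra. nra.
  rewrite E1, E2. rewrite <- Hss. field. split; lra.
Qed.

Fixpoint Hf a n x := match n with
  | O => H0 a x
  | S k => / (2*INR (S k) * (cc a*cc a)) * ((x^2-1)*x^(2*k+1)/Q a x ^ (S k))
           + (2*INR k + 1)/(2*INR (S k)*(cc a * cc a)) * Hf a k x
  end.

Lemma D_R a k x : a > -1 ->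
  D (fun y => (y^2-1)*y^(2*k+1) / Q a y ^ (S k)) x
    (((2*x*x^(2*k+1) + (x^2-1)*(INR (2*k+1) * x^(2*k))) * Q a x^(S k)
      - INR (S k) * Q a x ^ k * (4*x^3+4*a*x) * ((x^2-1)*x^(2*k+1))) / (Q a x ^ (S k))^2).
Proof.
  intros Ha. assert (HQ := Q_pos a x Ha).
  assert (H1 : D (fun y => y^2 - 1) x (2*x)).
  { eapply D_eqv. apply D_minus. apply (D_pow (fun y => y)), D_id. apply D_const. simpl; ring. }
  assert (H2 : D (fun y => y^(2*k+1)) x (INR (2*k+1) * x^(2*k))).
  { eapply D_eqv. apply (D_pow (fun y => y)), D_id.
    replace (pred (2*k+1)) with (2*k)%nat by lia. ring. }
  assert (H3 := D_mult _ _ x _ _ H1 H2).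
  assert (H4 : D (fun y => Q a y ^ S k) x (INR (S k) * Q a x ^ k * (4*x^3+4*a*x))).
  { eapply D_eqv. apply (D_pow (Q a)). apply D_Q. simpl pred. ring. }
  eapply D_eqv. apply (D_div _ _ x _ _ H3 H4). apply pow_nonzero; lra.
  reflexivity.
Qed.

Lemma D_Hf a n x : a > -1 -> D (Hf a n) x ((1+x^2)*x^(2*n)/Q a x^(S n)).
Proof.
  intros Ha. assert (HQ := Q_pos a x Ha). assert (Hc := cc_sq a Ha). assert (Hcp := cc_pos a Ha).
  induction n as [|k IH].
  - simpl. eapply D_eqv. apply D_H0; auto. field; lra.
  - apply D_ext with (f := fun y => / (2*INR (S k) * (cc a*cc a)) * ((y^2-1)*y^(2*k+1)/Q a y ^ (S k))
           + (2*INR k + 1)/(2*INR (S k)*(cc a * cc a)) * Hf a k y). intro; reflexivity.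
    eapply D_eqv. apply D_plus. apply D_scal. apply D_R; auto.
    apply D_scal. exact IH.
    set (c := cc a) in *. rewrite Hc.
    assert (HP : 0 < Q a x ^ k) by (apply pow_lt; auto).
    rewrite plus_INR, mult_INR, S_INR. simpl INR.
    replace (2 * S k)%nat with (2*k+1+1)%nat by lia.
    rewrite !pow_add. simpl.
    set (X := x^(2*k)) in *. set (P := Q a x ^ k) in *. unfold Q in *.
    field. repeat split; try lra. pose proof (pos_INR k); lra.
Qed.

Lemma lim_atan_inf (g : R -> R) :
  (forall K, exists M, forall x, x >= M -> g x >= K) ->
  lim_inf (fun x => atan (g x)) (PI/2).
Proof.
  intros Hg eps He.
  assert (HPI := PI_RGT_0).
  set (e := Rmin (eps/2) (PI/4)).
  assert (He1 : 0 < e) by (unfold e; apply Rmin_pos; lra).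
  assert (He2 : e <= PI/4) by apply Rmin_r.
  assert (He3 : e <= eps/2) by apply Rmin_l.
  destruct (Hg (tan (PI/2 - e))) as [M HM]. exists M. intros x Hx.
  specialize (HM x Hx).
  assert (Ht : atan (tan (PI/2 - e)) = PI/2 - e) by (apply atan_tan; lra).
  assert (atan (tan (PI/2 - e)) <= atan (g x)).
  { destruct (Rle_lt_or_eq_dec _ _ (Rge_le _ _ HM)) as [Hl|Hl].
    left; apply atan_increasing; auto. right; rewrite Hl; auto. }
  pose proof (atan_bound (g x)).
  rewrite Rabs_left1 by lra. lra.
Qed.

Lemma sqrtQ_le a x : a > -1 -> sqrt (Q a x) <= x^2 + Rabs a + 1.
Proof.
  intros Ha. assert (HQ := Q_pos a x Ha).
  rewrite <- (sqrt_pow2 (x^2 + Rabs a + 1)).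
  apply sqrt_le_1_alt. unfold Q. pose proof (Rabs_pos a). pose proof (Rle_abs a).
  assert (0 <= x^2) by nra.
  replace ((x^2 + Rabs a + 1)^2) with (x^2*x^2 + 2*(Rabs a + 1)*x^2 + (Rabs a+1)^2) by ring.
  replace (x^4) with (x^2*x^2) by ring. nra.
  pose proof (Rabs_pos a). assert (0 <= x^2) by nra. lra.
Qed.

Lemma lim_H0 a : a > -1 -> lim_inf (H0 a) (PI / cc a).
Proof.
  intros Ha. unfold H0.
  replace (PI / cc a) with (2 / cc a * (PI/2)) by (assert (H := cc_pos a Ha); field; lra).
  apply lim_scal. apply lim_atan_inf.
  intros K. assert (Hcp := cc_pos a Ha). pose proof (Rabs_pos a).
  exists (Rmax 0 (K * (2 + Rabs a) / cc a)). intros x Hx.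
  pose proof (Rmax_l 0 (K * (2 + Rabs a) / cc a)); pose proof (Rmax_r 0 (K * (2 + Rabs a) / cc a)).
  assert (HD := Dn_pos a x Ha).
  assert (HD2 : Dn a x <= 2 + Rabs a).
  { unfold Dn. pose proof (sqrtQ_le a x Ha). lra. }
  apply Rle_ge. apply Rle_trans with (cc a * x / (2 + Rabs a)).
  apply Rmult_le_reg_r with (2 + Rabs a). lra. unfold Rdiv. rewrite Rmult_assoc, Rinv_l by lra.
  apply Rmult_le_reg_l with (/ cc a). apply Rinv_0_lt_compat; lra.
  replace (/ cc a * (cc a * x * 1)) with x by (field; lra). unfold Rdiv in *. nra.
  unfold Rdiv. apply Rmult_le_compat_l. nra. apply Rinv_le_contravar; lra.
Qed.

Fixpoint Sval a n := match n with
  | O => PI / cc a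
  | S k => (2*INR k+1)/(2*INR (S k)*(cc a*cc a)) * Sval a k end.

Lemma lim_Hf a n : a > -1 -> lim_inf (Hf a n) (Sval a n).
Proof.
  intros Ha. induction n as [|k IH].
  - apply lim_H0; auto.
  - change (Sval a (S k)) with ((2*INR k+1)/(2*INR (S k)*(cc a*cc a)) * Sval a k).
    apply lim_ext with (F := fun y => / (2*INR (S k) * (cc a*cc a)) * ((y^2-1)*y^(2*k+1)/Q a y ^ (S k))
           + (2*INR k + 1)/(2*INR (S k)*(cc a * cc a)) * Hf a k y) (M0 := 0).
    intros; reflexivity.
    replace ((2*INR k+1)/(2*INR (S k)*(cc a*cc a)) * Sval a k) with
      (/ (2*INR (S k) * (cc a*cc a)) * 0 + (2*INR k+1)/(2*INR (S k)*(cc a*cc a)) * Sval a k) by ring.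
    apply lim_plus; apply lim_scal; auto.
    apply lim_ext with (F := fun y => y^(2*k+3) / Q a y ^ S k - y^(2*k+1) / Q a y ^ S k) (M0 := 0).
    { intros x _. assert (HQ := Q_pos a x Ha). replace (2*k+3)%nat with (2+(2*k+1))%nat by lia.
      rewrite pow_add. field. apply pow_nonzero; lra. }
    replace 0 with (0 - 0) by ring. apply lim_minus; apply lim_rat0; auto; lia.
Qed.

Lemma Hf_0 a n : Hf a n 0 = 0.
Proof.
  induction n as [|n IH].
  - simpl. unfold H0. rewrite Rmult_0_r. unfold Rdiv at 2. rewrite Rmult_0_l, atan_0. ring.
  - cbn [Hf]. rewrite IH, Nat.add_1_r. simpl (0 ^ S _). unfold Rdiv. ring.
Qed.

Lemma D_opp f x l : D f x l -> D (fun y => - f y) x (- l).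
Proof. intros H. eapply D_eqv. apply D_ext with (f := fun y => -1 * f y). intros; ring.
  apply D_scal; eauto. ring. Qed.

Definition gfun a n t := t^(2*n) / (1 - (2-2*a)*t^2)^(S n).

Lemma den_pos a t : a > -1 -> -1/2 <= t <= 1/2 -> 0 < 1 - (2-2*a)*t^2.
Proof. intros Ha Ht. assert (t^2 <= 1/4) by nra. assert (0 <= t^2) by nra.
  destruct (Rle_dec 0 (2-2*a)); nra. Qed.

Lemma D_cont f x l : D f x l -> continuity_pt f x.
Proof. intros H. apply derivable_continuous_pt. exists l. exact H. Qed.

Lemma cont_g a n (Ha : a > -1) : forall t, -1/2 <= t <= 1/2 -> continuity_pt (gfun a n) t.
Proof.
  intros t Ht. assert (Hd := den_pos a t Ha Ht). unfold gfun.
  eapply D_cont. apply D_div. apply (D_pow (fun y => y)), D_id.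
  apply D_pow. apply D_minus. apply D_const. apply D_scal. apply (D_pow (fun y => y)), D_id.
  apply pow_nonzero; lra.
Qed.

Lemma half_le : -1/2 <= 1/2.
Proof. lra. Qed.

Definition Phi a n (Ha : a > -1) := primitive half_le (FTC_P1 half_le (cont_g a n Ha)).

Lemma D_Phi a n Ha t : -1/2 <= t <= 1/2 -> D (Phi a n Ha) t (gfun a n t).
Proof. intros Ht. apply RiemannInt_P28; auto. Qed.

Definition tt x := x / (1 + x^2).

Lemma tt_bound x : -1/2 <= tt x <= 1/2.
Proof. unfold tt. assert (0 < 1 + x^2) by nra.
  assert (Ht : x / (1+x^2) * (1+x^2) = x) by (field; lra).
  set (t := x / (1+x^2)) in *. assert (0 <= (x+1)^2) by apply pow2_ge_0. assert (0 <= (x-1)^2) by apply pow2_ge_0.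
  split; apply Rnot_lt_le; intro Hc.
  - assert (-(t+1/2)*(1+x^2) > 0) by (apply Rmult_lt_0_compat; lra). nra.
  - assert ((t-1/2)*(1+x^2) > 0) by (apply Rmult_lt_0_compat; lra). nra.
Qed.

Lemma D_tt x : D tt x ((1-x^2)/(1+x^2)^2).
Proof. unfold tt. assert (0 < 1 + x^2) by nra. eapply D_eqv. apply D_div. apply D_id.
  apply D_plus. apply D_const. apply (D_pow (fun y => y)), D_id. lra. simpl. field. lra. Qed.

Definition Psi a n Ha x := - (Phi a n Ha (tt x) - Phi a n Ha 0).

Lemma D_Psi a n Ha x : D (Psi a n Ha) x ((x^2-1)*x^(2*n)/Q a x^(S n)).
Proof.
  unfold Psi. eapply D_eqv. apply D_opp. apply D_minus.
  apply (D_comp tt (Phi a n Ha)). apply D_tt. apply D_Phi. apply tt_bound. apply D_const.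
  assert (HQ := Q_pos a x Ha). assert (H1 : 0 < 1 + x^2) by nra.
  unfold gfun, tt.
  replace ((x/(1+x^2))^(2*n)) with (x^(2*n) / (1+x^2)^(2*n))
    by (unfold Rdiv; rewrite Rpow_mult_distr, pow_inv; reflexivity).
  replace (1 - (2 - 2*a) * (x / (1 + x^2))^2) with (Q a x / (1+x^2)^2) by (unfold Q; field; lra).
  replace ((Q a x / (1+x^2)^2)^(S n)) with (Q a x^(S n) / (1+x^2)^(2*n) / (1+x^2)^2)
    by (unfold Rdiv; rewrite Rpow_mult_distr, pow_inv, <- pow_mult;
        replace (2 * S n)%nat with (2*n+2)%nat by lia; rewrite pow_add; field;
        repeat split; try (apply pow_nonzero); lra).
  assert (0 < (1+x^2)^(2*n)) by (apply pow_lt; lra).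
  assert (0 < Q a x^(S n)) by (apply pow_lt; lra).
  field. repeat split; try lra.
Qed.

Lemma lim_comp_cont (phi F : R -> R) l : continuity_pt phi l -> lim_inf F l ->
  lim_inf (fun x => phi (F x)) (phi l).
Proof.
  intros Hc HF eps He.
  unfold continuity_pt, continue_in, limit1_in, limit_in in Hc. simpl in Hc.
  destruct (Hc eps He) as [alp [Halp Hal]].
  destruct (HF alp Halp) as [M HM]. exists M. intros x Hx.
  destruct (Req_dec (F x) l) as [E|E]. rewrite E, Rminus_diag, Rabs_R0; lra.
  apply Hal. split. split. exact I. auto. apply HM; auto.
Qed.

Lemma lim_tt : lim_inf tt 0.
Proof.
  intros eps He. exists (Rmax 1 (2/eps)). intros x Hx.
  pose proof (Rmax_l 1 (2/eps)); pose proof (Rmax_r 1 (2/eps)).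
  unfold tt. rewrite Rminus_0_r. assert (0 < 1 + x^2) by nra.
  rewrite Rabs_pos_eq by (apply Rlt_le, Rdiv_lt_0_compat; lra).
  assert (E : x / (1+x^2) = / x - / (x*(1+x^2))) by (field; lra). rewrite E.
  assert (0 < / (x*(1+x^2))) by (apply Rinv_0_lt_compat, Rmult_lt_0_compat; lra).
  assert (/ x <= / (2/eps)) by (apply Rinv_le_contravar; [apply Rdiv_lt_0_compat|]; lra).
  replace (/ (2/eps)) with (eps/2) in * by (field; lra). lra.
Qed.

Lemma lim_Psi a n Ha : lim_inf (Psi a n Ha) 0.
Proof.
  unfold Psi.
  apply lim_ext with (F := fun x => -1 * (Phi a n Ha (tt x) - Phi a n Ha 0)) (M0 := 0).
  intros; ring.
  apply lim_unique_shift with (-1 * (Phi a n Ha 0 - Phi a n Ha 0)); [|ring].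
  apply lim_scal. apply lim_minus. 2: apply lim_const.
  apply (lim_comp_cont (Phi a n Ha) tt 0). eapply D_cont. apply D_Phi. lra. apply lim_tt.
Qed.

Lemma Psi_0 a n Ha : Psi a n Ha 0 = 0.
Proof. unfold Psi, tt. replace (0 / (1 + 0^2)) with 0 by (simpl; field). ring. Qed.

Definition Gmid a n Ha x := (Hf a n x - Psi a n Ha x) / 2.

Lemma D_Gmid a n Ha x : D (Gmid a n Ha) x (x^(2*n) / Q a x^(S n)).
Proof.
  unfold Gmid. eapply D_eqv. apply derivable_pt_lim_div_scal. apply D_minus.
  apply D_Hf; auto. apply D_Psi. assert (HQ := Q_pos a x Ha).
  field. apply pow_nonzero; lra.
Qed.

Lemma lim_Gmid a n Ha : lim_inf (Gmid a n Ha) (Sval a n / 2).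
Proof.
  unfold Gmid. apply lim_ext with (F := fun x => /2 * (Hf a n x - Psi a n Ha x)) (M0 := 0).
  intros; field. apply lim_unique_shift with (/2 * (Sval a n - 0)); [|field].
  apply lim_scal, lim_minus. apply lim_Hf; auto. apply lim_Psi.
Qed.

Lemma Gmid_0 a n Ha : Gmid a n Ha 0 = 0.
Proof. unfold Gmid. rewrite Hf_0, Psi_0. field. Qed.

Fixpoint Gf a Ha (n : nat) : nat -> R -> R :=
  match n with
  | O => fun k x => Gmid a 0 Ha x
  | S n' => fix inner (k : nat) : R -> R :=
      match k with
      | O => fun x => Gmid a (S n') Ha x
      | S k' => fun x => (x^(2*(n' - k')+1) / Q a x^(S n')
                 + (2*INR (S n') + 2*INR (S k') - 1) * Gf a Ha n' k' x) / (4*INR (S n'))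
                 - a * inner k' x
      end
  end.

Fixpoint Lf a (n : nat) : nat -> R :=
  match n with
  | O => fun k => Sval a 0 / 2
  | S n' => fix inner (k : nat) : R :=
      match k with
      | O => Sval a (S n') / 2
      | S k' => (0 + (2*INR (S n') + 2*INR (S k') - 1) * Lf a n' k') / (4*INR (S n'))
                 - a * inner k'
      end
  end.

Lemma D_mono a p m x : a > -1 ->
  D (fun y => y^p / Q a y^m) x
    ((INR p * x^(pred p) * Q a x^m - INR m * Q a x^(pred m) * (4*x^3 + 4*a*x) * x^p) / (Q a x^m)^2).
Proof.
  intros Ha. assert (HQ := Q_pos a x Ha).
  assert (H1 := D_pow (fun y => y) x 1 p (D_id x)).
  assert (H2 := D_pow (Q a) x _ m (D_Q a x)).
  eapply D_eqv. apply (D_div _ _ x _ _ H1 H2).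
  apply pow_nonzero; lra. rewrite Rmult_1_r; reflexivity.
Qed.

Lemma D_Gf a Ha n k x : (k <= n)%nat -> D (Gf a Ha n k) x (x^(2*(n-k)) / Q a x^(S n)).
Proof.
  assert (HQ := Q_pos a x Ha).
  revert k. induction n as [|n' IHn]; intros k Hk.
  - replace k with 0%nat by lia. simpl Gf. apply D_Gmid.
  - induction k as [|k' IHk].
    + replace (S n' - 0)%nat with (S n') by lia. apply D_Gmid.
    + apply D_ext with (f := fun x => (x^(2*(n' - k')+1) / Q a x^(S n')
                 + (2*INR (S n') + 2*INR (S k') - 1) * Gf a Ha n' k' x) / (4*INR (S n'))
                 - a * Gf a Ha (S n') k' x). intros; reflexivity.
      eapply D_eqv. apply D_minus. apply derivable_pt_lim_div_scal. apply D_plus.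
      apply D_mono; auto. apply D_scal. apply IHn. lia. apply D_scal. apply IHk. lia.
      replace (S n' - k')%nat with (S (n' - k')) by lia.
      replace (S n' - S k')%nat with (n' - k')%nat by lia.
      replace (pred (2 * (n'-k') + 1)) with (2*(n'-k'))%nat by lia.
      simpl pred.
      replace (2 * S (n'-k'))%nat with (2*(n'-k') + 2)%nat by lia.
      assert (Hn : INR n' = INR (n' - k') + INR k') by (rewrite <- plus_INR; f_equal; lia).
      rewrite (S_INR n'), (S_INR k'), plus_INR, mult_INR, Hn.
      rewrite !pow_add.
      set (X := x^(2*(n'-k'))). set (P := Q a x ^ n'). set (J := INR (n'-k')). set (K := INR k').
      simpl. unfold P, Q in *. clear P.
      set (P := (x ^ 4 + 2 * a * x ^ 2 + 1) ^ n').
      assert (0 < P) by (apply pow_lt; lra).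
      assert (0 <= J) by apply pos_INR. assert (0 <= K) by apply pos_INR.
      field. repeat split; lra.
Qed.


Lemma Gf_0 a Ha n k : Gf a Ha n k 0 = 0.
Proof.
  revert k. induction n as [|n' IHn]; intros k.
  - simpl. apply Gmid_0.
  - induction k as [|k' IHk].
    + apply Gmid_0.
    + change (Gf a Ha (S n') (S k') 0) with ((0^(2*(n' - k')+1) / Q a 0^(S n')
                 + (2*INR (S n') + 2*INR (S k') - 1) * Gf a Ha n' k' 0) / (4*INR (S n'))
                 - a * Gf a Ha (S n') k' 0).
      rewrite IHn, IHk, pow_add. simpl (0^1). unfold Rdiv. ring.
Qed.

Lemma lim_Gf a Ha n k : (k <= n)%nat -> lim_inf (Gf a Ha n k) (Lf a n k).
Proof.
  revert k. induction n as [|n' IHn]; intros k Hk.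
  - simpl. apply lim_Gmid.
  - induction k as [|k' IHk].
    + apply lim_Gmid.
    + apply lim_ext with (F := fun x => (x^(2*(n' - k')+1) / Q a x^(S n')
                 + (2*INR (S n') + 2*INR (S k') - 1) * Gf a Ha n' k' x) / (4*INR (S n'))
                 - a * Gf a Ha (S n') k' x) (M0 := 0). intros; reflexivity.
      change (Lf a (S n') (S k')) with ((0 + (2*INR (S n') + 2*INR (S k') - 1) * Lf a n' k') / (4*INR (S n'))
                 - a * Lf a (S n') k').
      apply lim_minus. 2: apply lim_scal, IHk; lia.
      apply lim_ext with (F := fun x => / (4*INR (S n')) * (x^(2*(n' - k')+1) / Q a x^(S n')
                 + (2*INR (S n') + 2*INR (S k') - 1) * Gf a Ha n' k' x)) (M0 := 0).
      intros; unfold Rdiv; ring.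
      apply lim_unique_shift with (/ (4*INR (S n')) * (0 + (2*INR (S n') + 2*INR (S k') - 1) * Lf a n' k')).
      2: unfold Rdiv; ring.
      apply lim_scal, lim_plus. apply lim_rat0; auto; lia. apply lim_scal, IHn; lia.
Qed.

Definition h n := poch (/2) n.
Definition binR n k := if (k <=? n)%nat then INR (fact n) / (INR (fact k) * INR (fact (n-k))) else 0.

Lemma binR_eq n k : (k <= n)%nat -> binR n k = INR (fact n) / (INR (fact k) * INR (fact (n-k))).
Proof. intros H. unfold binR. apply Nat.leb_le in H. rewrite H. auto. Qed.
Lemma binR_0 n k : (n < k)%nat -> binR n k = 0.
Proof. intros H. unfold binR. destruct (Nat.leb_spec k n); [lia|auto]. Qed.

Lemma INR_fS n : INR (fact (S n)) = (INR n + 1) * INR (fact n).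
Proof. rewrite fact_simpl, mult_INR, S_INR. ring. Qed.

Lemma bin_key i k' : (i <= k')%nat ->
  (binR (S k' + S i) (2*S i) - binR (k' + S i) (2*S i)) * (INR i + /2)
  = (INR k' + INR i + 1)/2 * binR (k'+i) (2*i).
Proof.
  intros Hik. destruct (Nat.eq_dec i k') as [E|E].
  - subst k'. rewrite (binR_0 (i + S i)) by lia.
    rewrite !binR_eq by lia.
    replace (S i + S i - 2 * S i)%nat with 0%nat by lia.
    replace (i + i - 2 * i)%nat with 0%nat by lia.
    replace (S i + S i)%nat with (2 * S i)%nat by lia.
    replace (i + i)%nat with (2 * i)%nat by lia. simpl fact at 2 4. simpl INR.
    assert (H1 := INR_fact_neq_0 (2 * S i)). assert (H2 := INR_fact_neq_0 (2*i)).
    field. auto.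
  - destruct (Nat.le_exists_sub (S i) k') as [l [Hl _]]. lia.
    rewrite !binR_eq by lia.
    replace (S k' + S i - 2 * S i)%nat with (S l) by lia.
    replace (k' + S i - 2 * S i)%nat with l by lia.
    replace (k' + i - 2 * i)%nat with (S l) by lia.
    replace (S k' + S i)%nat with (S (S (S (2*i+l)))) by lia.
    replace (k' + S i)%nat with (S (S (2*i+l))) by lia.
    replace (k' + i)%nat with (S (2*i+l)) by lia.
    replace (2 * S i)%nat with (S (S (2*i))) by lia.
    rewrite !INR_fS.
    assert (Hk : INR k' = INR l + 1 + INR i) by (rewrite Hl, plus_INR, S_INR; ring).
    rewrite Hk. rewrite !S_INR, !plus_INR, !mult_INR. simpl INR.
    assert (H1 := INR_fact_neq_0 (2*i+l)). assert (H2 := INR_fact_neq_0 (2*i)).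
    assert (H3 := INR_fact_neq_0 l). assert (0 <= INR i) by apply pos_INR.
    assert (0 <= INR l) by apply pos_INR.
    field. repeat split; try lra; auto.
Qed.

Definition tm (Cc : R) n k i := binR (k+i) (2*i) * Cc^i * h i * h (n-i) / INR (fact n).
Definition Tsum Cc n k := sum_f_R0 (tm Cc n k) k.

Lemma h_S n : h (S n) = h n * (/2 + INR n).
Proof. reflexivity. Qed.

Lemma tm_key Cc n' k' i : (i <= k')%nat -> (k' <= n')%nat ->
  tm Cc (S n') (S k') (S i) =
  (2*INR (S n') + 2*INR (S k') - 1)/(4*INR (S n')) * Cc * tm Cc n' k' i
  - (Cc/2) * tm Cc (S n') k' i + tm Cc (S n') k' (S i).
Proof.
  intros Hi Hk. unfold tm.
  assert (K := bin_key i k' Hi).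
  assert (0 <= INR i) by apply pos_INR.
  replace (binR (S k' + S i) (2 * S i)) with
    (binR (k' + S i) (2 * S i) + (INR k' + INR i + 1) / 2 * binR (k' + i) (2 * i) / (INR i + /2))
    by (rewrite <- K; field; lra).
  replace (S n' - S i)%nat with (n' - i)%nat by lia.
  replace (S n' - i)%nat with (S (n' - i)) by lia.
  rewrite !h_S, INR_fS, !S_INR, minus_INR by lia.
  simpl pow.
  assert (H1 := INR_fact_neq_0 n'). assert (0 <= INR n') by apply pos_INR.
  field. repeat split; lra.
Qed.

Lemma scal_sum' (An : nat -> R) N x : sum_f_R0 (fun i => x * An i) N = x * sum_f_R0 An N.
Proof. rewrite scal_sum. apply sum_eq. intros; ring. Qed.

Lemma T_rec Cc n' k' : (k' <= n')%nat ->
  Tsum Cc (S n') (S k') =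
  (2*INR (S n') + 2*INR (S k') - 1)/(4*INR (S n')) * Cc * Tsum Cc n' k'
  - (Cc/2 - 1) * Tsum Cc (S n') k'.
Proof.
  intros Hk. unfold Tsum.
  rewrite decomp_sum by lia. simpl pred.
  assert (E : sum_f_R0 (tm Cc (S n') k') k' = sum_f_R0 (tm Cc (S n') k') (S k')).
  { simpl sum_f_R0 at 2. unfold tm at 3. rewrite binR_0 by lia. unfold Rdiv. ring. }
  assert (F1 : sum_f_R0 (tm Cc (S n') k') k' = tm Cc (S n') k' 0 + sum_f_R0 (fun i => tm Cc (S n') k' (S i)) k').
  { rewrite E, (decomp_sum (tm Cc (S n') k') (S k')) by lia. reflexivity. }
  clear E.
  assert (E0 : tm Cc (S n') (S k') 0 = tm Cc (S n') k' 0).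
  { unfold tm. rewrite !binR_eq by lia. rewrite !Nat.add_0_r, !Nat.sub_0_r.
    replace (2*0)%nat with 0%nat by reflexivity.
    assert (H1 := INR_fact_neq_0 k'). assert (H2 := INR_fact_neq_0 (S k')).
    assert (H3 := INR_fact_neq_0 (S n')). assert (H4 := INR_fact_neq_0 0). field. auto. }
  rewrite E0.
  rewrite (sum_eq (fun i => tm Cc (S n') (S k') (S i))
    (fun i => (2*INR (S n') + 2*INR (S k') - 1)/(4*INR (S n')) * Cc * tm Cc n' k' i
  - (Cc/2) * tm Cc (S n') k' i + tm Cc (S n') k' (S i))).
  2: { intros i Hi. apply tm_key; lia. }
  rewrite plus_sum, minus_sum, !scal_sum'. rewrite F1. ring.
Qed.

Lemma Sval_closed a n : a > -1 -> Sval a n = PI * h n / (INR (fact n) * cc a ^ (2*n+1)).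
Proof.
  intros Ha. assert (Hc := cc_pos a Ha).
  induction n as [|k IH].
  - simpl. unfold h; simpl. field. lra.
  - change (Sval a (S k)) with ((2*INR k+1)/(2*INR (S k)*(cc a*cc a)) * Sval a k).
    rewrite IH, h_S, INR_fS, S_INR.
    replace (2 * S k + 1)%nat with (2*k+1+2)%nat by lia. rewrite (pow_add (cc a) (2*k+1) 2). simpl (cc a ^ 2).
    assert (H1 := INR_fact_neq_0 k). assert (0 <= INR k) by apply pos_INR.
    assert (0 < cc a ^ (2*k+1)) by (apply pow_lt; lra).
    field. repeat split; lra.
Qed.

Lemma Tsum_0 Cc n : Tsum Cc n 0 = h n / INR (fact n).
Proof. unfold Tsum, tm. simpl. rewrite binR_eq by lia. simpl. unfold h. simpl. rewrite Nat.sub_0_r. field.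
  apply INR_fact_neq_0. Qed.

Lemma Lf_closed a n k : a > -1 -> (k <= n)%nat ->
  Lf a n k = PI/2 * Tsum (cc a * cc a) n k / cc a ^ (2*n+1).
Proof.
  intros Ha. assert (Hc := cc_pos a Ha). assert (Hc2 := cc_sq a Ha).
  revert k. induction n as [|n' IHn]; intros k Hk.
  - replace k with 0%nat by lia. change (Lf a 0 0) with (Sval a 0 / 2). rewrite Sval_closed, Tsum_0 by auto.
    assert (H1 := INR_fact_neq_0 0). assert (0 < cc a ^ (2*0+1)) by (apply pow_lt; lra).
    field. lra.
  - induction k as [|k' IHk].
    + change (Lf a (S n') 0) with (Sval a (S n') / 2). rewrite Sval_closed, Tsum_0 by auto.
      assert (H1 := INR_fact_neq_0 (S n')). assert (0 < cc a ^ (2*S n'+1)) by (apply pow_lt; lra).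
      field. lra.
    + change (Lf a (S n') (S k')) with ((0 + (2*INR (S n') + 2*INR (S k') - 1) * Lf a n' k') / (4*INR (S n'))
                 - a * Lf a (S n') k').
      rewrite IHn, IHk by lia. rewrite T_rec by lia.
      replace (2 * S n' + 1)%nat with (2*n'+1+2)%nat by lia. rewrite (pow_add (cc a) (2*n'+1) 2). simpl (cc a ^ 2).
      set (c := cc a) in *. replace a with (c * c / 2 - 1) by lra.
      assert (0 < c ^ (2*n'+1)) by (apply pow_lt; lra).
      assert (0 <= INR n') by apply pos_INR.
      rewrite S_INR. field. repeat split; lra.
Qed.

Lemma h_fact n : h n = INR (fact (2*n)) / (4^n * INR (fact n)).
Proof.
  induction n as [|k IH].
  - unfold h; simpl. field.
  - rewrite h_S, IH. replace (2 * S k)%nat with (S (S (2*k))) by lia.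
    rewrite !INR_fS, S_INR, mult_INR. replace (INR 2) with 2 by (simpl; ring).
    assert (H1 := INR_fact_neq_0 k). assert (H2 := INR_fact_neq_0 (2*k)).
    assert (0 <= INR k) by apply pos_INR. assert (0 < 4^k) by (apply pow_lt; lra).
    replace (4^S k) with (4*4^k) by reflexivity. field. repeat split; lra.
Qed.

Lemma h_pos n : 0 < h n.
Proof. induction n. unfold h; simpl; lra. rewrite h_S. assert (0 <= INR n) by apply pos_INR.
  apply Rmult_lt_0_compat; lra. Qed.

Lemma poch_shift c m i : poch c (m+i) = poch c m * poch (c + INR m) i.
Proof.
  induction i as [|i IH].
  - rewrite Nat.add_0_r. simpl. ring.
  - rewrite Nat.add_succ_r. simpl. rewrite IH, plus_INR. ring.
Qed.

Lemma term_eq a m i : (i <= m)%nat ->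
  tm (2*(a+1)) m m i =
  h m / (INR (fact (2*m)))^2 *
    (INR (fact (2*m - 2*i)) * INR (fact (2*m + 2*i))
      / (poch (INR m + /2) i * INR (fact (m - i)))
      * C m i * ((a + 1) / 2)^i).
Proof.
  intros Hi. destruct (Nat.le_exists_sub i m Hi) as [j [Hj _]]. subst m.
  unfold tm, C. rewrite binR_eq by lia.
  assert (Hp : poch (INR (j+i) + /2) i = h (j+i+i) / h (j+i)).
  { unfold h. rewrite (poch_shift (/2) (j+i) i). rewrite Rplus_comm.
    assert (poch (/2) (j+i) <> 0) by (apply Rgt_not_eq, h_pos).
    field. auto. }
  rewrite Hp.
  replace (j + i + i - 2*i)%nat with j by lia.
  replace (j + i - i)%nat with j by lia.
  replace (2*(j+i) - 2*i)%nat with (2*j)%nat by lia.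
  replace (2*(j+i) + 2*i)%nat with (2*(j+i+i))%nat by lia.
  rewrite !h_fact.
  replace (2*(a+1)) with (4 * ((a+1)/2)) by field.
  rewrite Rpow_mult_distr.
  replace (j+i+i)%nat with (j + (i + i))%nat by lia. rewrite !(pow_add 4).
  assert (F1 := INR_fact_neq_0 j). assert (F2 := INR_fact_neq_0 i).
  assert (F3 := INR_fact_neq_0 (2*j)). assert (F4 := INR_fact_neq_0 (2*i)).
  assert (F5 := INR_fact_neq_0 (j+i)). assert (F6 := INR_fact_neq_0 (2*(j+i))).
  assert (F7 := INR_fact_neq_0 (j+(i+i))). assert (F8 := INR_fact_neq_0 (2*(j+(i+i)))).
  assert (0 < 4^i) by (apply pow_lt; lra). assert (0 < 4^j) by (apply pow_lt; lra).
  replace (j+i+i)%nat with (j + (i + i))%nat by lia.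
  field. repeat split; try lra; auto.
Qed.

Lemma poch_pos c i : 0 < c -> 0 < poch c i.
Proof. intros Hc. induction i; simpl. lra. assert (0 <= INR i) by apply pos_INR.
  apply Rmult_lt_0_compat; lra. Qed.

Lemma exch (f : nat -> nat -> R) m :
  sum_f_R0 (fun i => sum_f_R0 (fun j => f i j) i) m =
  sum_f_R0 (fun j => sum_f_R0 (fun k => f (j+k)%nat j) (m-j)) m.
Proof.
  induction m as [|m IH].
  - simpl. reflexivity.
  - simpl sum_f_R0 at 1. rewrite IH.
    replace (S m - S m)%nat with 0%nat by lia. 
    transitivity (sum_f_R0 (fun j => sum_f_R0 (fun k => f (j+k)%nat j) (S m - j)) m
                  + f (S m) (S m)).
    2: { simpl sum_f_R0 at 3. rewrite Nat.sub_diag. simpl. rewrite Nat.add_0_r. reflexivity. }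
    rewrite (sum_eq (fun j => sum_f_R0 (fun k => f (j+k)%nat j) (S m - j))
                    (fun j => sum_f_R0 (fun k => f (j+k)%nat j) (m - j) + f (S m) j)).
    2: { intros j Hj. replace (S m - j)%nat with (S (m - j)) by lia. simpl.
         replace (j + S (m - j))%nat with (S m) by lia. reflexivity. }
    rewrite plus_sum. rewrite Rplus_assoc. reflexivity.
Qed.

Lemma Pm_dcoef m a : Pm m a = sum_f_R0 (fun j => dcoef j m * a^j) m.
Proof.
  unfold Pm, dcoef.
  set (K := poch (/2) m / INR (fact (2*m))^2).
  set (A := fun i => INR (fact (2*m - 2*i)) * INR (fact (2*m + 2*i))
      / (poch (INR m + /2) i * INR (fact (m - i)))).
  assert (HA : forall i, INR (fact (2*m - 2*i)) * INR (fact (2*m + 2*i))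
      / (poch (INR m + /2) i * INR (fact (m - i)) * 2^i) = A i / 2^i).
  { intros i. unfold A. assert (0 < poch (INR m + /2) i).
    apply poch_pos. pose proof (pos_INR m). lra.
    assert (0 < 2^i) by (apply pow_lt; lra). pose proof (INR_fact_neq_0 (m-i)).
    field. repeat split; lra. }
  rewrite (sum_eq (fun i => A i * C m i * ((a+1)/2)^i)
      (fun i => sum_f_R0 (fun j => A i / 2^i * C m i * C i j * a^j) i)).
  2: { intros i _. replace (((a+1)/2)^i) with ((a+1)^i / 2^i)
         by (unfold Rdiv; rewrite Rpow_mult_distr, pow_inv; reflexivity).
       rewrite binomial. set (S := sum_f_R0 _ i).
       replace (A i * C m i * (S / 2^i)) with ((A i / 2^i * C m i) * S)
         by (field; apply pow_nonzero; lra).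
       unfold S. rewrite <- scal_sum'.
       apply sum_eq. intros j _. rewrite pow1. ring. }
  rewrite exch. rewrite scal_sum.
  apply sum_eq. intros j _.
  rewrite (sum_eq (fun k => INR (fact (2 * m - 2 * (j + k))) * INR (fact (2 * m + 2 * (j + k))) /
     (poch (INR m + / 2) (j + k) * INR (fact (m - (j + k))) * 2 ^ (j + k)) *
     C m (j + k) * C (j + k) j) (fun k => A (j+k)%nat / 2^(j+k) * C m (j+k) * C (j+k) j))
    by (intros; rewrite HA; reflexivity).
  rewrite <- (scal_sum (fun k => A (j+k)%nat / 2^(j+k) * C m (j+k) * C (j+k) j) (m-j) (a^j)).
  ring.
Qed.

Lemma Pm_T m a : Pm m a = Tsum (2*(a+1)) m m.
Proof.
  unfold Tsum. rewrite (sum_eq _ _ m (fun i Hi => term_eq a m i Hi)).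
  rewrite scal_sum'. unfold Pm, h. reflexivity.
Qed.

Lemma Rpower_cc a m : a > -1 -> Rpower (2*(a+1)) (INR m + /2) = cc a ^ (2*m+1).
Proof.
  intros Ha. rewrite Rpower_plus, Rpower_pow, Rpower_sqrt by lra.
  rewrite pow_add, pow_mult. simpl (cc a ^ 2). simpl (cc a ^ 1).
  rewrite Rmult_1_r, cc_sq by auto. unfold cc. ring.
Qed.

Lemma Lf_final a m : a > -1 ->
  Lf a m m = PI / 2 * Pm m a / Rpower (2 * (a + 1)) (INR m + /2).
Proof.
  intros Ha. rewrite Lf_closed by auto. rewrite Rpower_cc, Pm_T, cc_sq by auto. reflexivity.
Qed.

Lemma f_eq a m x : x^(2*(m-m)) / Q a x ^ (S m) = / (x^4 + 2*a*x^2 + 1)^(m+1).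
Proof. rewrite Nat.sub_diag, Nat.add_1_r. simpl (x^(2*0)). unfold Rdiv, Q. ring. Qed.

Lemma f_D a m x : a > -1 -> exists l, D (fun x => / (x^4 + 2*a*x^2 + 1)^(m+1)) x l.
Proof. intros Ha. eexists. eapply D_ext. intro y. apply (f_eq a m y).
  apply D_mono with (p := (2*(m-m))%nat); auto. Qed.

Theorem mainTheorem2 (m : nat) (a : R) (ha : a > -1) :
  improper_int_0_inf (fun x => / (x^4 + 2*a*x^2 + 1)^(m+1))
    (PI / 2 * Pm m a / Rpower (2 * (a + 1)) (INR m + /2))
  /\ Pm m a = sum_f_R0 (fun j => dcoef j m * a^j) m.
Proof.
  split; [| apply Pm_dcoef].
  assert (Hc : forall x, continuity_pt (fun x => / (x^4 + 2*a*x^2 + 1)^(m+1)) x).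
  { intros x. destruct (f_D a m x ha) as [l Hl]. eapply D_cont. exact Hl. }
  split.
  - intros b Hb. constructor. apply continuity_implies_RiemannInt; auto.
  - intros eps He. destruct (lim_Gf a ha m m (le_n m) eps He) as [M HM].
    exists (Rmax 0 M). intros b pr Hb.
    pose proof (Rmax_l 0 M); pose proof (Rmax_r 0 M).
    rewrite (FTC_gen _ (Gf a ha m m) 0 b pr).
    + rewrite Gf_0, Rminus_0_r, <- Lf_final by auto. apply HM. lra.
    + lra.
    + auto.
    + intros x _. eapply D_eqv. apply D_Gf; auto. apply f_eq.
Qed.
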